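(* Let $G$ be a simple graph, let $k\ge 1$, let $M$ be a maximal $k$-edge-colorable subgraph of $G$ (maximal with respect to inclusion of edge sets), and let $F$ be the set of vertices $v$ with $d_M(v) < k$. Then the induced subgraph $G[F]$ has maximum degree at most $k-1$.
   Context: $d_M(v)$ denotes the number of edges of $M$ incident to $v$. A graph is $k$-edge-colorable if its edges can be colored with $k$ colors so that adjacent edges receive distinct colors. *)

(* Defs.v *)
From mathcomp Require Import all_boot.
Set Implicit Arguments. Unset Strict Implicit. Unset Printing Implicit Defensive.

Definition simple_graph (T : finType) (e : rel T) : Prop :=
  irreflexive e /\ symmetric e.

Definition edges (T : finType) (e : rel T) : {set {set T}} :=
  [set [set p.1; p.2] | p : T * T & e p.1 p.2].

Definition degM (T : finType) (M : {set {set T}}) (v : T) : nat :=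
  #|[set f in M | v \in f]|.

Definition edge_colorable (T : finType) (k : nat) (M : {set {set T}}) : Prop :=
  exists c : {set T} -> 'I_k,
    forall f g, f \in M -> g \in M -> f != g -> f :&: g != set0 -> c f != c g.

Definition maximal_kec_subgraph (T : finType) (e : rel T) (k : nat)
    (M : {set {set T}}) : Prop :=
  [/\ M \subset edges e, edge_colorable k M &
      forall M' : {set {set T}}, M \subset M' -> M' \subset edges e ->
        edge_colorable k M' -> M' = M].

(* Main.v *)
Require Import Defs.
From mathcomp Require Import all_boot.
From mathcomp Require Import zify.
Set Implicit Arguments. Unset Strict Implicit. Unset Printing Implicit Defensive.

Fixpoint walk (T : Type) (sa sd : T -> T) (v : T) (n : nat) : T :=
  match n with 0 => v | n'.+1 => (if odd n' then sa else sd) (walk sa sd v n') end.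

Lemma walk_unique (T : finType) (sa sd : T -> T) (v p p' : T) :
  involutive sa -> involutive sd -> sa v = v ->
  p != v -> p' != v -> sd p = p -> sd p' = p' ->
  connect (fun w u => (sa w == u) || (sd w == u)) v p ->
  connect (fun w u => (sa w == u) || (sd w == u)) v p' -> p = p'.
Proof.
move=> Ia Id Hv pv p'v Hp Hp' Cp Cp'.
set kr := (fun w u => (sa w == u) || (sd w == u)) in Cp Cp'.
pose W := walk sa sd v.
have WS n : W n.+1 = (if odd n then sa else sd) (W n) by [].
have Winv n : (if odd n then sa else sd) (W n.+1) = W n.
  by rewrite WS; case: (odd n); [apply: Ia | apply: Id].
have reach : forall w, connect kr v w -> exists n, W n = w.
  move=> w /connectP [q Hq ->].
  have H0 : exists n, W n = v by exists 0.
  suff gen : forall q0 x, path kr x q0 -> (exists n, W n = x) -> exists n, W n = last x q0 by apply: gen.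
  elim=> [|y q1 IH] x /=.
    by [].
  move=> /andP [Hxy Hq1] [n Hn]; apply: IH => //.
  case: n Hn => [|n] Hn.
    move: Hn Hxy; rewrite /= => <-; rewrite /kr Hv.
    by case/orP => /eqP <-; [exists 0 | exists 1].
  move: Hxy; rewrite /kr => /orP [] /eqP <-.
    case On: (odd n).
      by exists n; rewrite -Hn -(Winv n) On.
    by exists n.+2; rewrite WS /= On -Hn.
  case On: (odd n).
    by exists n.+2; rewrite WS /= On -Hn.
  by exists n; rewrite -Hn -(Winv n) On.
have fixp : forall j, sd (W j) = W j -> 0 < j ->
    exists n0, W n0.+1 = W n0 /\ (n0 = j \/ n0.+1 = j).
  move=> [|j] //= Hj _.
  case Oj: (odd j).
    exists j.+1; split; [rewrite WS /= Oj | by left]. by rewrite -{2}Hj.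
  exists j; split; last by right.
  by rewrite -[RHS](Winv j) Oj Hj.
have bound : forall n, W n.+1 = W n -> forall w, connect kr v w -> exists2 i, i <= n & W i = w.
  move=> n Hn w /connectP [q Hq ->].
  have H0 : exists2 i, i <= n & W i = v by exists 0.
  suff gen : forall q0 x, path kr x q0 -> (exists2 i, i <= n & W i = x) -> exists2 i, i <= n & W i = last x q0 by apply: gen.
  elim=> [|y q1 IH] x /=; first by [].
  move=> /andP [Hxy Hq1] [i Hi Hix]; apply: IH => //.
  have back : forall i, i <= n -> forall y, kr (W i) y -> y != (if odd i then sa else sd) (W i) ->
      exists2 j, j <= n & W j = y.
    move=> [|i'] Hi' y' Hy' Hne.
      exists 0 => //; move: Hy' Hne; rewrite /kr /= Hv.
      by case/orP => /eqP <- //; rewrite eqxx.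
    exists i' => //; first by apply: ltnW.
    move: Hy' Hne; rewrite /kr -(Winv i').
    case Oi: (odd i'); rewrite /= Oi /=.
      by case/orP=> /eqP <-; rewrite ?eqxx // Ia.
    by case/orP=> /eqP <-; rewrite ?eqxx // Id.
  rewrite -Hix in Hxy.
  case E: (y == (if odd i then sa else sd) (W i)).
    move/eqP: E => ->.
    case: (ltngtP i n) Hi => // [Hin _|-> _]; first by exists i.+1.
    by exists n => //; rewrite Hn.
  by apply: (back i) => //; rewrite E.
have key : forall q, q != v -> sd q = q -> connect kr v q ->
    forall n, W n.+1 = W n -> (forall m, W m.+1 = W m -> n <= m) -> q = W n.
  move=> q qv Hq Cq n Hn Hmin.
  have [i Hi Wi] := bound n Hn q Cq.
  have i0 : 0 < i by case: i Hi Wi => // _ W0; move: qv; rewrite -W0 eqxx.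
  have Wi' : sd (W i) = W i by rewrite Wi.
  have [n0 [Hn0 [E|E]]] := fixp i Wi' i0.
    by have := Hmin _ Hn0; rewrite E => Hni; rewrite -Wi (_ : i = n) //; apply/eqP; rewrite eqn_leq Hi Hni.
  by have := Hmin _ Hn0; move: Hi; rewrite -E; lia.
have [j Wj] := reach p Cp.
have j0 : 0 < j by case: j Wj => // W0; move: pv; rewrite -W0 eqxx.
have exfix : exists n, W n.+1 = W n.
  have Wj' : sd (W j) = W j by rewrite Wj.
  by have [n0 [H _]] := fixp j Wj' j0; exists n0.
pose P := fun n => W n.+1 == W n.
have exP : exists n, P n by have [n H] := exfix; exists n; apply/eqP.
have Hn : W (ex_minn exP).+1 = W (ex_minn exP) by apply/eqP; case: ex_minnP.
have Hmin : forall m, W m.+1 = W m -> ex_minn exP <= m.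
  by move=> m Hm; case: ex_minnP => n _ H; apply: H; apply/eqP.
by rewrite (key p pv Hp Cp _ Hn Hmin) (key p' p'v Hp' Cp' _ Hn Hmin).
Qed.

Definition miss (T : finType) k (M : {set {set T}}) (c : {set T} -> 'I_k) (w : T) (b : 'I_k) : bool :=
  [forall f in M, (w \in f) ==> (c f != b)].
Definition proper (T : finType) k (M : {set {set T}}) (c : {set T} -> 'I_k) : Prop :=
  forall f g, f \in M -> g \in M -> f != g -> f :&: g != set0 -> c f != c g.
Definition twoset (T : finType) (M : {set {set T}}) : Prop :=
  forall f, f \in M -> exists x y, x != y /\ f = [set x; y].

Lemma missP (T : finType) k (M : {set {set T}}) (c : {set T} -> 'I_k) w b f :
  miss M c w b -> f \in M -> w \in f -> c f != b.
Proof. by move/forall_inP => H fM wf; move: (H f fM) => /implyP; apply. Qed.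

Lemma missI (T : finType) k (M : {set {set T}}) (c : {set T} -> 'I_k) w b :
  (forall f, f \in M -> w \in f -> c f != b) -> miss M c w b.
Proof. by move=> H; apply/forall_inP => f fM; apply/implyP; apply: H. Qed.

Lemma two_neq (T : finType) (M : {set {set T}}) x y :
  twoset M -> [set x; y] \in M -> x != y.
Proof.
move=> tw /tw [x' [y' [Hne E]]]; apply/negP => /eqP Exy.
have := congr1 (fun A : {set T} => #|A|) E.
by rewrite !cards2 Hne Exy eqxx.
Qed.

Lemma set2_inj (T : finType) (x y y' : T) :
  x != y' -> [set x; y] = [set x; y'] -> y = y'.
Proof.
move=> Hne E; have : y' \in [set x; y] by rewrite E set22.
by case/set2P => // /eqP; rewrite eq_sym (negbTE Hne).
Qed.

Lemma share (T : finType) (f g : {set T}) w : w \in f -> w \in g -> f :&: g != set0.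
Proof. by move=> wf wg; apply/set0Pn; exists w; rewrite inE wf wg. Qed.

Lemma pair_eq (T : finType) (x y x' y' : T) :
  x \in [set x'; y'] -> y \in [set x'; y'] -> x != y -> [set x; y] = [set x'; y'].
Proof.
case/set2P => -> /set2P [] -> //; rewrite ?eqxx //.
by rewrite setUC.
Qed.

Definition sig (T : finType) k (M : {set {set T}}) (c : {set T} -> 'I_k) (b : 'I_k) (w : T) : T :=
  if [pick y | ([set w; y] \in M) && (c [set w; y] == b)] is Some y then y else w.

Lemma sig_eq (T : finType) k (M : {set {set T}}) (c : {set T} -> 'I_k) b w y :
  proper M c -> twoset M -> [set w; y] \in M -> c [set w; y] = b -> sig M c b w = y.
Proof.
move=> pr tw Hm Hc; rewrite /sig; case: pickP => [y' /andP [H1 /eqP H2] | H].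
  apply/eqP; apply/negPn/negP => Hne.
  have := pr _ _ H1 Hm; rewrite H2 Hc eqxx => /(_ _ _)/negP; apply => //.
    apply/negP => /eqP E; move/negP: Hne; apply; apply/eqP.
    by apply: set2_inj E; apply: two_neq tw Hm.
  by apply: (@share _ _ _ w); rewrite set21.
by move: (H y); rewrite Hm Hc eqxx.
Qed.

Lemma sig_neq (T : finType) k (M : {set {set T}}) (c : {set T} -> 'I_k) b w :
  sig M c b w != w -> [set w; sig M c b w] \in M /\ c [set w; sig M c b w] = b.
Proof.
rewrite /sig; case: pickP => [y /andP [H1 /eqP H2] | H] //; last by rewrite eqxx.
Qed.

Lemma sig_miss (T : finType) k (M : {set {set T}}) (c : {set T} -> 'I_k) b w :
  miss M c w b -> sig M c b w = w.
Proof.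
move=> Hm; rewrite /sig; case: pickP => [y /andP [H1 /eqP H2] | H] //.
by move: (missP Hm H1 (set21 w y)); rewrite H2 eqxx.
Qed.

Lemma sig_inv (T : finType) k (M : {set {set T}}) (c : {set T} -> 'I_k) b :
  proper M c -> twoset M -> involutive (sig M c b).
Proof.
move=> pr tw w; case E: (sig M c b w == w); first by rewrite (eqP E) (eqP E).
have [H1 H2] := sig_neq (negbT E).
by apply: sig_eq => //; rewrite setUC.
Qed.

Definition kr (T : finType) k (M : {set {set T}}) (c : {set T} -> 'I_k) (a d : 'I_k) :=
  fun w u => (sig M c a w == u) || (sig M c d w == u).

Lemma edge_kr (T : finType) k (M : {set {set T}}) (c : {set T} -> 'I_k) a d f x y :
  proper M c -> twoset M -> f \in M -> (c f == a) || (c f == d) ->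
  x \in f -> y \in f -> x != y -> kr M c a d x y.
Proof.
move=> pr tw fM Hc xf yf xy.
have [x' [y' [_ Ef]]] := tw f fM.
have E : [set x; y] = f by rewrite Ef; apply: pair_eq; rewrite -?Ef.
rewrite /kr; case/orP: Hc => /eqP Hc.
  by rewrite (sig_eq pr tw (y := y) (b := a)) ?E ?eqxx.
by rewrite (sig_eq pr tw (y := y) (b := d)) ?E ?eqxx ?orbT.
Qed.

Definition sw k (a d b : 'I_k) := if b == a then d else if b == d then a else b.

Lemma swK k (a d : 'I_k) : a != d -> involutive (sw a d).
Proof.
move=> ad b; rewrite /sw.
case: (eqVneq b a) => [->|ba]; first by rewrite eq_sym (negbTE ad) eqxx.
case: (eqVneq b d) => [->|bd]; first by rewrite eqxx.
by rewrite (negbTE ba) (negbTE bd).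
Qed.

Definition kswap (T : finType) k (c : {set T} -> 'I_k) (a d : 'I_k) (C : {set T}) :=
  fun f : {set T} => if f :&: C != set0 then sw a d (c f) else c f.


Lemma touch_in (T : finType) k (M : {set {set T}}) (c : {set T} -> 'I_k) a d q f x :
  proper M c -> twoset M -> f \in M -> (c f == a) || (c f == d) ->
  f :&: [set u | connect (kr M c a d) q u] != set0 -> x \in f ->
  x \in [set u | connect (kr M c a d) q u].
Proof.
move=> pr tw fM Hc /set0Pn [w /setIP [wf wC]] xf.
case: (eqVneq w x) => [<- //|wx].
move: wC; rewrite !inE => wC; apply: connect_trans wC _; apply: connect1.
exact: edge_kr pr tw fM Hc wf xf wx.
Qed.

Lemma kswap_proper (T : finType) k (M : {set {set T}}) (c : {set T} -> 'I_k) a d q :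
  proper M c -> twoset M -> a != d ->
  proper M (kswap c a d [set u | connect (kr M c a d) q u]).
Proof.
move=> pr tw ad f g fM gM fg fgI.
have [w /setIP [wf wg]] := set0Pn _ fgI.
set C := [set u | connect (kr M c a d) q u].
have swI := can_inj (swK ad).
rewrite /kswap.
have sw_id b : ~~ ((b == a) || (b == d)) -> sw a d b = b.
  by rewrite /sw negb_or => /andP [/negbTE -> /negbTE ->].
case Tf: (f :&: C != set0); case Tg: (g :&: C != set0).
- by apply/negP => /eqP /swI /eqP; apply/negP; apply: pr.
- case Hf: ((c f == a) || (c f == d)).
    have := touch_in pr tw fM Hf Tf wf => wC.
    by move: Tg; rewrite (share wg wC).
  by rewrite sw_id ?Hf //; apply: pr.
- case Hg: ((c g == a) || (c g == d)).
    have := touch_in pr tw gM Hg Tg wg => wC.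
    by move: Tf; rewrite (share wf wC).
  by rewrite (sw_id (c g)) ?Hg //; apply: pr.
- by apply: pr.
Qed.

Lemma kswap_miss (T : finType) k (M : {set {set T}}) (c : {set T} -> 'I_k) a d q z b :
  proper M c -> twoset M ->
  miss M c z b -> (z \notin [set u | connect (kr M c a d) q u]) || ((b != a) && (b != d)) ->
  miss M (kswap c a d [set u | connect (kr M c a d) q u]) z b.
Proof.
move=> pr tw Hm Hz; apply: missI => g gM zg; rewrite /kswap.
case Tg: (_ != set0); last exact: missP Hm gM zg.
case Hg: ((c g == a) || (c g == d)).
  have zC := touch_in pr tw gM Hg Tg zg.
  move: Hz; rewrite zC /= => /andP [ba bd].
  by case/orP: Hg => /eqP ->; rewrite /sw ?eqxx; [rewrite eq_sym | case: ifP => _; rewrite eq_sym].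
have -> : sw a d (c g) = c g by move/negbT: Hg; rewrite /sw negb_or => /andP [/negbTE -> /negbTE ->].
exact: missP Hm gM zg.
Qed.

Lemma kswap_miss_swap (T : finType) k (M : {set {set T}}) (c : {set T} -> 'I_k) a d q z :
  a != d -> z \in [set u | connect (kr M c a d) q u] -> miss M c z d ->
  miss M (kswap c a d [set u | connect (kr M c a d) q u]) z a.
Proof.
move=> ad zC Hm; apply: missI => g gM zg; rewrite /kswap (share zg zC).
apply/negP => /eqP E.
have : c g = d by rewrite -(swK ad (c g)) E /sw eqxx.
by move/eqP; apply/negP; apply: missP Hm gM zg.
Qed.

Lemma kswap_at (T : finType) k (M : {set {set T}}) (c : {set T} -> 'I_k) a d q z g :
  proper M c -> twoset M ->
  z \notin [set u | connect (kr M c a d) q u] -> g \in M -> z \in g ->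
  kswap c a d [set u | connect (kr M c a d) q u] g = c g.
Proof.
move=> pr tw zC gM zg; rewrite /kswap.
case Tg: (_ != set0) => //.
case Hg: ((c g == a) || (c g == d)).
  by move: zC; rewrite (touch_in pr tw gM Hg Tg zg).
by move/negbT: Hg; rewrite /sw negb_or => /andP [/negbTE -> /negbTE ->].
Qed.

Definition rf (T : finType) k (M : {set {set T}}) (c : {set T} -> 'I_k) (v : T) :=
  fun u w => ([set v; w] \in M) && miss M c u (c [set v; w]).

Lemma last_nth (T : Type) (v x0 : T) p : last x0 p = nth v (x0 :: p) (size p).
Proof. by elim: p x0 => //= y p IH x0; rewrite IH. Qed.

Lemma fan_direct (T : finType) k (M : {set {set T}}) (c : {set T} -> 'I_k) v x0 p a :
  proper M c -> twoset M -> uniq (x0 :: p) -> v \notin x0 :: p ->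
  [set v; x0] \notin M -> path (rf M c v) x0 p ->
  miss M c v a -> miss M c (last x0 p) a ->
  exists c' : {set T} -> 'I_k, proper (M :|: [set [set v; x0]]) c'.
Proof.
move=> pr tw un vs vx0 pa mva mla.
set s := x0 :: p.
pose z i := nth v s i.
pose col i := if i.+1 < size s then c [set v; z i.+1] else a.
pose c' f := if [pick i : 'I_(size s) | f == [set v; z i]] is Some i then col (val i) else c f.
exists c'.
have zs i : i < size s -> z i \in s by apply: mem_nth.
have zv i : i < size s -> v != z i by move=> Hi; apply/negP => /eqP E; move: vs; rewrite E zs.
have zinj i j : i < size s -> j < size s -> z i = z j -> i = j.
  by move=> Hi Hj /eqP; rewrite nth_uniq // => /eqP.
have einj i j : i < size s -> j < size s -> [set v; z i] = [set v; z j] -> i = j.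
  by move=> Hi Hj E; apply: zinj => //; apply: set2_inj E; apply: zv.
have step i : i.+1 < size s -> ([set v; z i.+1] \in M) && miss M c (z i) (c [set v; z i.+1]).
  by move=> Hi; move/pathP: pa => /(_ v i Hi).
have mcol i : i < size s -> miss M c (z i) (col i).
  move=> Hi; rewrite /col; case: ifP => Hi1; first by case/andP: (step i Hi1).
  have -> : i = size p by move: Hi Hi1 => /=; lia.
  by rewrite /z -last_nth.
have cv i g : i < size s -> g \in M -> v \in g -> (i.+1 < size s -> g != [set v; z i.+1]) ->
    col i != c g.
  move=> Hi gM vg Hg; rewrite /col; case: ifP => Hi1.
    have [e1 _] := andP (step i Hi1).
    by apply: pr => //; [rewrite eq_sym; apply: Hg | apply: (@share _ _ _ v); rewrite ?set21].
  by rewrite eq_sym; apply: missP mva gM vg.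
have key i g w : i < size s -> g \in M -> (forall j : 'I_(size s), g != [set v; z j]) ->
    w \in [set v; z i] -> w \in g -> col i != c g.
  move=> Hi gM Hg /set2P [->|->] wg.
    apply: cv => // Hi1; exact: (Hg (Ordinal Hi1)).
  by rewrite eq_sym; apply: missP (mcol i Hi) gM wg.
have inM f : f \in M :|: [set [set v; x0]] -> (forall j : 'I_(size s), f != [set v; z j]) -> f \in M.
  case/setUP => // /set1P -> H; move: (H (Ordinal (ltn0Sn (size p)))).
  by rewrite eqxx.
move=> f g fM gM fg /set0Pn [w /setIP [wf wg]].
rewrite /c'; case: pickP => [i /eqP Ef | Nf]; case: pickP => [j /eqP Eg | Ng].
- have ij : val i != val j.
    by apply/negP => /eqP /val_inj Eij; move: fg; rewrite Ef Eg Eij eqxx.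
  rewrite /col; case: ifP => Hi1; case: ifP => Hj1.
  + have [e1 _] := andP (step _ Hi1); have [e2 _] := andP (step _ Hj1).
    apply: pr => //; last by apply: (@share _ _ _ v); rewrite set21.
    by apply/negP => /eqP /(einj _ _ Hi1 Hj1) [] /eqP; apply/negP.
  + apply: missP mva _ _; first by case/andP: (step _ Hi1).
    by rewrite set21.
  + rewrite eq_sym; apply: missP mva _ _; first by case/andP: (step _ Hj1).
    by rewrite set21.
  + case/negP: ij; apply/eqP; move: (ltn_ord i) (ltn_ord j) Hi1 Hj1 => /=; move: (val i) (val j) => i0 j0; lia.
- have gM' := inM _ gM (fun j => negbT (Ng j)).
  by apply: (key _ _ w (ltn_ord i) gM') => //; [move=> j; apply: negbT (Ng j) | rewrite -Ef].
- have fM' := inM _ fM (fun j => negbT (Nf j)).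
  by rewrite eq_sym; apply: (key _ _ w (ltn_ord j) fM') => //; [move=> j'; apply: negbT (Nf j') | rewrite -Eg].
- apply: pr => //; [exact: inM _ fM (fun j => negbT (Nf j)) | exact: inM _ gM (fun j => negbT (Ng j)) | exact: share wf wg].
Qed.

Lemma fan_none (T : finType) k (M : {set {set T}}) (c : {set T} -> 'I_k) v x0 p a d :
  proper M c -> twoset M -> uniq (x0 :: p) -> v \notin x0 :: p ->
  [set v; x0] \notin M -> path (rf M c v) x0 p ->
  miss M c v a -> a != d -> miss M c (last x0 p) d ->
  ~~ connect (kr M c a d) (last x0 p) v ->
  (forall i, i < size p -> c [set v; nth v p i] = d ->
     nth v (x0 :: p) i \notin [set u | connect (kr M c a d) (last x0 p) u]) ->
  exists c' : {set T} -> 'I_k, proper (M :|: [set [set v; x0]]) c'.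
Proof.
move=> pr tw un vs vx0 pa mva ad mld nc Hnone.
set C := [set u | connect (kr M c a d) (last x0 p) u].
have vC : v \notin C by rewrite inE.
have lC : last x0 p \in C by rewrite inE connect0.
apply: (fan_direct (c := kswap c a d C) (p := p) (a := a)) => //.
- exact: kswap_proper.
- apply/(pathP v) => i Hi; move/pathP: pa => /(_ v i Hi) /andP [eM mz].
  rewrite /rf eM /= (kswap_at pr tw vC eM (set21 _ _)).
  apply: kswap_miss => //.
  case: (eqVneq (c [set v; nth v p i]) d) => [E|Nd].
    by rewrite (Hnone i Hi E).
  have Na : c [set v; nth v p i] != a by apply: missP mva eM (set21 _ _).
  by rewrite Na orbT.
- by apply: kswap_miss => //; rewrite vC.
- exact: kswap_miss_swap.
Qed.

Lemma fan_kempe (T : finType) k (M : {set {set T}}) (c : {set T} -> 'I_k) v x0 p a d :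
  proper M c -> twoset M -> uniq (x0 :: p) -> v \notin x0 :: p ->
  [set v; x0] \notin M -> path (rf M c v) x0 p ->
  miss M c v a -> a != d -> miss M c (last x0 p) d ->
  ~~ connect (kr M c a d) (last x0 p) v ->
  exists c' : {set T} -> 'I_k, proper (M :|: [set [set v; x0]]) c'.
Proof.
move=> pr tw.
suff H : forall n p, size p <= n -> uniq (x0 :: p) -> v \notin x0 :: p ->
  [set v; x0] \notin M -> path (rf M c v) x0 p ->
  miss M c v a -> a != d -> miss M c (last x0 p) d ->
  ~~ connect (kr M c a d) (last x0 p) v ->
  exists c' : {set T} -> 'I_k, proper (M :|: [set [set v; x0]]) c'.
  by apply: (H (size p)).
elim=> [|n IH] {}p Hs un vs vx0 pa mva ad mld nc.
  by apply: (fan_none (c := c) (p := p) (a := a) (d := d)) => // i; case: p Hs {un vs pa mld nc}.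
case: (boolP [exists i : 'I_(size p), (c [set v; nth v p i] == d) &&
          (nth v (x0 :: p) i \in [set u | connect (kr M c a d) (last x0 p) u])]); last first.
  move=> Hn; apply: (fan_none (c := c) (p := p) (a := a) (d := d)) => // i Hi Ei; apply/negP => Hin.
  by move/existsP: Hn; apply; exists (Ordinal Hi); rewrite Ei eqxx Hin.
case/existsP => i /andP [/eqP Ei Hin].
have Ex : x0 :: take i p = take i.+1 (x0 :: p) by [].
have Hl : last x0 (take i p) = nth v (x0 :: p) i.
  rewrite (last_nth v) Ex nth_take; last by rewrite size_take (ltn_ord i) ltnSn.
  by rewrite size_take (ltn_ord i).
apply: (IH (take i p)).
- by rewrite size_take (ltn_ord i); move: (ltn_ord i) Hs; lia.
- by rewrite Ex take_uniq.
- by apply/negP; rewrite Ex => /mem_take H; move/negP: vs; apply.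
- exact: vx0.
- exact: take_path.
- exact: mva.
- exact: ad.
- move/pathP: pa => /(_ v i (ltn_ord i)) /andP [_]; rewrite Hl Ei //.
- apply/negP; rewrite Hl => Hc; move/negP: nc; apply; move: Hin; rewrite inE => Hin.
  exact: connect_trans Hin Hc.
Qed.

Lemma miss_ex (T : finType) k (M : {set {set T}}) (c : {set T} -> 'I_k) w :
  #|[set f in M | w \in f]| < k -> exists b, miss M c w b.
Proof.
move=> Hd; case: (boolP [exists b, miss M c w b]) => [/existsP //|/existsPn Hn]; exfalso.
have sub : [set: 'I_k] \subset c @: [set f in M | w \in f].
  apply/subsetP => b _; move: (Hn b); rewrite negb_forall_in => /exists_inP [f fM].
  by rewrite negb_imply negbK => /andP [wf /eqP <-]; apply: imset_f; rewrite inE fM wf.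
have := subset_leq_card sub; rewrite cardsT card_ord => H.
by have := leq_trans H (leq_imset_card _ _); rewrite leqNgt Hd.
Qed.

Lemma path_last_in (T : finType) (r : rel T) (P : T -> Prop) x p :
  path r x p -> (forall u w, r u w -> P w) -> forall y, y \in p -> P y.
Proof.
elim: p x => //= z p IH x /andP [rxz pz] HP y; rewrite inE => /orP [/eqP ->|yp].
  exact: HP rxz.
exact: IH pz HP y yp.
Qed.

Lemma edge_form (T : finType) (M : {set {set T}}) f v :
  twoset M -> f \in M -> v \in f -> exists y, f = [set v; y].
Proof.
move=> tw fM vf; have [x [y [_ E]]] := tw f fM.
move: vf; rewrite E => /set2P [] ->; first by exists y.
by exists x; rewrite setUC.
Qed.

Lemma core (T : finType) (e : rel T) k (M : {set {set T}}) (c : {set T} -> 'I_k) v :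
  irreflexive e -> twoset M -> proper M c ->
  (forall y, [set v; y] \in M -> e v y) ->
  #|[set f in M | v \in f]| < k ->
  k <= #|[set u | (#|[set f in M | u \in f]| < k) && e v u]| ->
  exists x, [/\ e v x, [set v; x] \notin M &
    exists c' : {set T} -> 'I_k, proper (M :|: [set [set v; x]]) c'].
Proof.
move=> irr tw pr eM vF Hbig.
pose F := [set u | #|[set f in M | u \in f]| < k].
have [a0 ma0] := miss_ex c vF.
pose dm u := if [pick b | miss M c u b] is Some b then b else a0.
have dmP u : u \in F -> miss M c u (dm u).
  rewrite inE => uF; rewrite /dm; case: pickP => [b //|H].
  by have [b Hb] := miss_ex c uF; move: (H b); rewrite Hb.
pose rr u w := [&& u \in F, [set v; w] \in M & c [set v; w] == dm u].
pose X := [set x | [&& e v x, x \in F & [set v; x] \notin M]].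
pose R := [set w | [exists x in X, connect rr x w]].
pose RF := R :&: F.
have rr_rf : subrel rr (rf M c v).
  move=> u w /and3P [uF wM /eqP cw]; rewrite /rf wM /= cw; exact: dmP.
have fan_of w : w \in R -> exists x p, [/\ x \in X, uniq (x :: p), path rr x p & last x p = w].
  rewrite inE => /exists_inP [x xX /connectP [p0 Hp0 ->]].
  case: (shortenP Hp0) => p' Hp' Hu _.
  by exists x, p'.
have vX x : x \in X -> v != x.
  rewrite inE => /and3P [evx _ _]; apply/negP => /eqP E; move: evx; by rewrite -E irr.
have pM x p : path rr x p -> forall y, y \in p -> [set v; y] \in M.
  by move=> Hp; apply: (path_last_in Hp) => u w /and3P [].
have vnot x p : x \in X -> path rr x p -> v \notin x :: p.
  move=> xX Hp; rewrite inE negb_or (vX x xX) /=; apply/negP => vp.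
  by have := two_neq tw (pM x p Hp v vp); rewrite eqxx.
have R_cases w : w \in R -> (w \in X) \/ ([set v; w] \in M).
  move=> /fan_of [x [p [xX _ Hp <-]]].
  case: p Hp => [|y p] Hp; first by left.
  right; exact: (pM x (y :: p) Hp (last y p) (mem_last y p)).
have Rv w : w \in R -> v != w.
  case/R_cases => [/vX //|wM]; exact: two_neq tw wM.
have XM x : x \in X -> [set v; x] \notin M by rewrite inE => /and3P [].
have Xe x : x \in X -> e v x by rewrite inE => /and3P [].
case: (boolP [exists u in RF, miss M c v (dm u)]) => [/exists_inP [u uRF mu]|NA].
  have [uR uF] := setIP uRF.
  have [x [p [xX un Hp Hl]]] := fan_of u uR.
  exists x; split; [exact: Xe | exact: XM |].
  apply: (fan_direct (c := c) (p := p) (a := dm u)) => //; [exact: vnot xX Hp | exact: XM | exact: (sub_path rr_rf Hp) | by rewrite Hl; apply: dmP].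
case: (boolP [exists u in RF, exists u' in RF, (u != u') && (dm u == dm u')]).
  case/exists_inP => u uRF /exists_inP [u' u'RF /andP [uu' /eqP Ed]].
  have [uR uF] := setIP uRF; have [u'R u'F] := setIP u'RF.
  set d := dm u.
  have ad : a0 != d.
    apply/negP => /eqP E; move/exists_inP: NA; apply; exists u => //; by rewrite -/d -E.
  have krsym : symmetric (kr M c a0 d).
    move=> w y; rewrite /kr; apply/idP/idP => /orP [] /eqP <-;
      by rewrite (sig_inv _ pr tw) eqxx ?orbT.
  have nc : ~~ connect (kr M c a0 d) u v || ~~ connect (kr M c a0 d) u' v.
    rewrite -negb_and; apply/negP => /andP [C1 C2].
    move/negP: uu'; apply; apply/eqP; apply: (walk_unique (sa := sig M c a0) (sd := sig M c d) (v := v)).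
    - exact: sig_inv.
    - exact: sig_inv.
    - exact: sig_miss.
    - by rewrite eq_sym; apply: Rv.
    - by rewrite eq_sym; apply: Rv.
    - by apply: sig_miss; apply: dmP.
    - by apply: sig_miss; rewrite /d Ed; apply: dmP.
    - by move: C1; rewrite (sym_connect_sym krsym) => H; exact: H.
    - by move: C2; rewrite (sym_connect_sym krsym) => H; exact: H.
  have Hw : exists w, [/\ w \in R, miss M c w d & ~~ connect (kr M c a0 d) w v].
    case/orP: nc => H; first by exists u; split => //; apply: dmP.
    by exists u'; split => //; rewrite /d Ed; apply: dmP.
  case: Hw => w [wR mw ncw].
  have [x [p [xX un Hp Hl]]] := fan_of w wR.
  exists x; split; [exact: Xe | exact: XM |].
  apply: (fan_kempe (c := c) (p := p) (a := a0) (d := d)) => //; [exact: vnot xX Hp | exact: XM | exact: (sub_path rr_rf Hp) | by rewrite Hl | by rewrite Hl].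
move=> NB; exfalso.
have H1 u : u \in RF -> ~~ miss M c v (dm u).
  by move=> uRF; apply/negP => m; move/exists_inP: NA; apply; exists u.
have H2 : {in RF &, injective dm}.
  move=> u u' uR u'R E; apply/eqP; apply/negPn/negP => ne; move/exists_inP: NB; apply.
  by exists u => //; apply/exists_inP; exists u' => //; rewrite ne E eqxx.
pose g u := if [pick y | ([set v; y] \in M) && (c [set v; y] == dm u)] is Some y then y else v.
have gP u : u \in RF -> ([set v; g u] \in M) && (c [set v; g u] == dm u).
  move=> uRF; rewrite /g; case: pickP => [y // | Hn]; exfalso.
  move: (H1 u uRF); rewrite /miss negb_forall_in => /exists_inP [f fM].
  rewrite negb_imply negbK => /andP [vf /eqP cf].
  have [y Ef] := edge_form tw fM vf.
  by move: (Hn y); rewrite -Ef fM cf eqxx.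
have gR u : u \in RF -> g u \in R.
  move=> uRF; have [uR uF] := setIP uRF.
  move: uR; rewrite !inE => /exists_inP [x xX Cx]; apply/exists_inP; exists x => //.
  apply: connect_trans Cx (connect1 _); rewrite /rr uF; exact: gP.
have ginj : {in RF &, injective g}.
  move=> u u' uR u'R E; apply: H2 => //.
  by have /andP [_ /eqP <-] := gP u uR; have /andP [_ /eqP <-] := gP u' u'R; rewrite E.
pose Y := [set y in R | [set v; y] \in M].
pose Mout := [set y | ([set v; y] \in M) && (y \notin F)].
pose Mnb := [set y | [set v; y] \in M].
pose Nb := [set u | (#|[set f in M | u \in f]| < k) && e v u].
have h1 : #|RF| <= #|Y|.
  rewrite -(card_in_imset ginj); apply: subset_leq_card; apply/subsetP => y /imsetP [u uRF ->].
  by rewrite inE gR //; case/andP: (gP u uRF).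
have h2 : Y \subset (RF :\: X) :|: Mout.
  apply/subsetP => y; rewrite !inE => /andP [yR yM].
  case yF: (#|[set f in M | y \in f]| < k); rewrite ?yR ?yM /= ?andbT ?orbT //.
  by rewrite andbF.
have h3 : X \subset RF.
  apply/subsetP => x xX; rewrite inE; apply/andP; split.
    by rewrite inE; apply/exists_inP; exists x => //; apply: connect0.
  by move: xX; rewrite inE => /and3P [].
have h4 := cardsDS h3.
have h5 := subset_leq_card h3.
have h2' := leq_trans (subset_leq_card h2) (leq_card_setU _ _).1.
have h6 := cardsID X Nb.
have h6' : #|Nb :&: X| <= #|X| by apply: subset_leq_card; apply: subsetIr.
have h7 : Nb :\: X \subset Mnb :&: F.
  apply/subsetP => u; rewrite !inE => /andP [nX /andP [uF evu]].
  rewrite uF andbT; move: nX; rewrite uF evu /=; by rewrite negbK.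
have h8 : Mout \subset Mnb :\: F.
  by apply/subsetP => y; rewrite !inE => /andP [-> ->].
have h9 := cardsID F Mnb.
have h10 : #|Mnb| <= #|[set f in M | v \in f]|.
  have inj : {in Mnb &, injective (fun y => [set v; y])}.
    move=> y y'; rewrite !inE => yM y'M E; apply: set2_inj E.
    exact: two_neq tw y'M.
  rewrite -(card_in_imset inj); apply: subset_leq_card; apply/subsetP => f /imsetP [y yM ->].
  by move: yM; rewrite !inE eqxx andbT.
have := subset_leq_card h7; have := subset_leq_card h8.
move: Hbig; rewrite -/Nb => Hbig.
move: h1 h2' h4 h5 h6 h6' h9 h10 vF Hbig; lia.
Qed.

Theorem mainTheorem2 (T : finType) (e : rel T) (k : nat) (M : {set {set T}}) :
  simple_graph e -> 1 <= k -> maximal_kec_subgraph e k M ->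
  let F := [set v | degM M v < k] in
  forall v, v \in F -> #|[set u in F | e v u]| <= k - 1.
Proof.
move=> [irr sym] k1 [Msub [c pr] maxM] F v vF.
rewrite leqNgt; apply/negP => Hlt.
have tw : twoset M.
  move=> f fM; move/subsetP: Msub => /(_ f fM) /imsetP [[x y]]; rewrite inE /= => exy ->.
  exists x, y; split => //; apply/negP => /eqP E; move: exy; by rewrite E irr.
have eM y : [set v; y] \in M -> e v y.
  move=> Hy; move/subsetP: Msub => /(_ _ Hy) /imsetP [[x1 x2]]; rewrite inE /= => e12 E.
  have vy := two_neq tw Hy.
  have Hv : v \in [set x1; x2] by rewrite -E set21.
  have Hy' : y \in [set x1; x2] by rewrite -E set22.
  move: vy e12; case/set2P: Hv => ->; case/set2P: Hy' => ->; rewrite ?eqxx // => _ H; by rewrite // sym.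
have pr' : proper M c := pr.
have vF' : #|[set f in M | v \in f]| < k by move: vF; rewrite inE.
have Hbig : k <= #|[set u | (#|[set f in M | u \in f]| < k) && e v u]|.
  have -> : [set u | (#|[set f in M | u \in f]| < k) && e v u] = [set u in F | e v u].
    by apply/setP => u; rewrite !inE.
  by move: Hlt k1; lia.
have [x [evx xM [c' pr'']]] := core irr tw pr' eM vF' Hbig.
have E := maxM (M :|: [set [set v; x]]) (subsetUl _ _).
have E' : M :|: [set [set v; x]] = M.
  apply: E; last by exists c'.
  by rewrite subUset Msub sub1set; apply/imsetP; exists (v, x); rewrite ?inE.
have : [set v; x] \in M :|: [set [set v; x]] by rewrite !inE eqxx orbT.
by rewrite E' (negbTE xM).
Qed.
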